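(* Let $G$ be a SIN topological group and $\Omega$ a topological group. Then the right action of $G$ on $\mathcal R(\Omega,G)$ by conjugation, $(\varphi,g)\mapsto g^{-1}\varphi g$, is uniformly continuous, where $G$ carries its uniform structure with entourages $\{(\tilde g,g):\tilde gg^{-1}\in V\}$ and $\mathcal R(\Omega,G)$ carries the uniform structure $\mathbf U_{\mathcal R}$.
   Context: SIN: the identity has a fundamental system of conjugation-invariant neighbourhoods. $\mathcal R(\Omega,G)$ is the set of continuous homomorphisms $\Omega\to G$. $\mathcal V_G$ is the set of open neighbourhoods $V$ of the identity of $G$ with $V=V^{-1}$. $\mathbf U_{\mathcal R}$ is the uniform structure on $\mathcal R(\Omega,G)$ with fundamental entourages $\mathcal O(K,V)=\{(h,\tilde h):\tilde h(c)h(c^{-1})\in V\ \forall c\in K\}$, $K\subset\Omega$ compact, $V\in\mathcal V_G$. (In the paper $\Omega=\Omega_C$ for an $X$-groupoid $C$.) *)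

(* Defs.v *)
From mathcomp Require Import all_boot all_algebra.
From mathcomp Require Import all_classical all_reals topology.
Set Implicit Arguments. Unset Strict Implicit. Unset Printing Implicit Defensive.
Local Open Scope classical_set_scope.

Definition is_topgroup (T : topologicalType) (mul : T -> T -> T)
  (inv : T -> T) (one : T) : Prop :=
  [/\ (forall x y z, mul x (mul y z) = mul (mul x y) z),
      (forall x, mul one x = x),
      (forall x, mul (inv x) x = one),
      continuous (fun p : T * T => mul p.1 p.2)
    & continuous inv].

Definition SIN (T : topologicalType) (mul : T -> T -> T) (inv : T -> T)
  (one : T) : Prop :=
  forall U : set T, nbhs one U ->
    exists V : set T, [/\ nbhs one V, V `<=` U &
      forall g x, V x -> V (mul (mul g x) (inv g))].

Definition sym_open_nbhd (T : topologicalType) (inv : T -> T) (one : T)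
  (V : set T) : Prop :=
  [/\ open V, V one & forall x, V x -> V (inv x)].

Definition cont_hom (O G : topologicalType) (mulO : O -> O -> O)
  (mulG : G -> G -> G) (h : O -> G) : Prop :=
  continuous h /\ forall a b, h (mulO a b) = mulG (h a) (h b).

Definition entO (O G : topologicalType) (invO : O -> O) (mulG : G -> G -> G)
  (K : set O) (V : set G) (h h' : O -> G) : Prop :=
  forall c, K c -> V (mulG (h' c) (h (invO c))).

Definition conj_act (O G : topologicalType) (mulG : G -> G -> G)
  (invG : G -> G) (h : O -> G) (g : G) : O -> G :=
  fun c => mulG (mulG (invG g) (h c)) g.

(* Main.v *)
Require Import Defs.
From mathcomp Require Import all_boot all_algebra.
From mathcomp Require Import all_classical all_reals topology.
Local Open Scope classical_set_scope.

Lemma cont2_nbhs (T : topologicalType) (f : T * T -> T) (a b : T) (P : set T) :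
  continuous f -> nbhs (f (a,b)) P ->
  exists A B, [/\ nbhs a A, nbhs b B & forall x y, A x -> B y -> P (f (x,y))].
Proof.
move=> cf nP. have := cf (a,b) P nP.
move=> [[A B] /= [nA nB] sub]. exists A, B; split => // x y Ax By. exact: (sub (x,y)).
Qed.

Arguments cont2_nbhs {T f a b P}.
Section Grp.
Variables (T : Type) (mul : T -> T -> T) (inv : T -> T) (one : T).
Hypotheses (mA : forall x y z, mul x (mul y z) = mul (mul x y) z)
  (m1 : forall x, mul one x = x) (mV : forall x, mul (inv x) x = one).

Lemma gmulVK x y : mul (inv x) (mul x y) = y.
Proof. by rewrite mA mV m1. Qed.
Lemma gmulxV x : mul x (inv x) = one.
Proof.
rewrite -[mul x _]m1 -{1}(mV (inv x)) -mA (mA (inv x)) mV m1 mV. by [].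
Qed.
Lemma gmulx1 x : mul x one = x.
Proof. by rewrite -(mV x) mA gmulxV m1. Qed.
Lemma gmulKV x y : mul x (mul (inv x) y) = y.
Proof. by rewrite mA gmulxV m1. Qed.
Lemma ginvK x : inv (inv x) = x.
Proof. by rewrite -[inv (inv x)]gmulx1 -(mV x) mA mV m1. Qed.
Lemma ginv_uniq x y : mul y x = one -> y = inv x.
Proof. by move=> e; rewrite -[y]gmulx1 -(gmulxV x) mA e m1. Qed.
Lemma ginvM x y : inv (mul x y) = mul (inv y) (inv x).
Proof.
symmetry; apply: ginv_uniq.
by rewrite -mA (mA (inv x)) mV m1 mV.
Qed.
Lemma ginv1 : inv one = one.
Proof. by rewrite -[inv one]gmulx1 mV. Qed.
End Grp.
Arguments gmulVK {T mul inv one}.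
Arguments gmulxV {T mul inv one}.
Arguments gmulx1 {T mul inv one}.
Arguments gmulKV {T mul inv one}.
Arguments ginvK {T mul inv one}.
Arguments ginv_uniq {T mul inv one}.
Arguments ginvM {T mul inv one}.
Arguments ginv1 {T mul inv one}.

Lemma hom_inv (O G : Type) (mulO : O -> O -> O) invO oneO mulG invG oneG
  (h : O -> G) :
  (forall x y z, mulO x (mulO y z) = mulO (mulO x y) z) ->
  (forall x, mulO oneO x = x) -> (forall x, mulO (invO x) x = oneO) ->
  (forall x y z, mulG x (mulG y z) = mulG (mulG x y) z) ->
  (forall x, mulG oneG x = x) -> (forall x, mulG (invG x) x = oneG) ->
  (forall a b, h (mulO a b) = mulG (h a) (h b)) ->
  forall c, h (invO c) = invG (h c).
Proof.
move=> a1 l1 v1 a2 l2 v2 hm c.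
have h1 : h oneO = oneG.
  have e : mulG (h oneO) (h oneO) = h oneO by rewrite -hm l1.
  by rewrite -(gmulVK a2 l2 v2 (h oneO) (h oneO)) e v2.
apply: (ginv_uniq a2 l2 v2). by rewrite -hm v1.
Qed.

Theorem proposition3p4 (G O : topologicalType)
  (mulG : G -> G -> G) (invG : G -> G) (oneG : G)
  (mulO : O -> O -> O) (invO : O -> O) (oneO : O)
  (HG : is_topgroup mulG invG oneG) (HO : is_topgroup mulO invO oneO)
  (HSIN : SIN mulG invG oneG) :
  forall (K : set O) (V : set G), compact K -> sym_open_nbhd invG oneG V ->
  exists (K' : set O) (V' W : set G),
    [/\ compact K', sym_open_nbhd invG oneG V', sym_open_nbhd invG oneG W &
      forall (h h' : O -> G) (g g' : G),
        cont_hom mulO mulG h -> cont_hom mulO mulG h' ->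
        entO invO mulG K' V' h h' -> W (mulG g' (invG g)) ->
        entO invO mulG K V (conj_act mulG invG h g) (conj_act mulG invG h' g')].
Proof.
case: HG => a2 l2 v2 cm ci.
case: HO => a1 l1 v1 _ _.
move=> K V cK [oV V1 Vs].
have nV : nbhs oneG V by apply: open_nbhs_nbhs; split.
have [V0 [nV0 V0V V0c]] := HSIN V nV.
pose f := fun p : G * G => mulG p.1 p.2.
have cf : continuous f by [].
have nV0' : nbhs (f (oneG, oneG)) V0 by rewrite /f /= l2.
have [A [B [nA nB AB]]] := cont2_nbhs cf nV0'.
have nAB : nbhs oneG (A `&` B) by apply: filterI.
have nAB' : nbhs (f (oneG, oneG)) (A `&` B) by rewrite /f /= l2.
have [C [D [nC nD CD]]] := cont2_nbhs cf nAB'.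
have nCD : nbhs oneG (C `&` D `&` (A `&` B)) by apply: filterI => //; apply: filterI.
have [W2 [nW2 W2s W2c]] := HSIN _ nCD.
have conjc : forall g x (P : set G), nbhs (mulG (mulG g x) (invG g)) P ->
    nbhs x [set y | P (mulG (mulG g y) (invG g))].
  move=> g x P nP.
  have [A1 [B1 [nA1 nB1 AB1]]] := cont2_nbhs cf nP.
  have nA1' : nbhs (f (g, x)) A1 by [].
  have [C1 [D1 [nC1 nD1 CD1]]] := cont2_nbhs cf nA1'.
  apply: filterS nD1 => y Dy /=.
  apply: (AB1 _ _ (CD1 _ _ (nbhs_singleton nC1) Dy) (nbhs_singleton nB1)).
have ck1 : forall g x, mulG (mulG (invG g) (mulG (mulG g x) (invG g))) (invG (invG g)) = x.
  move=> g x. rewrite (ginvK a2 l2 v2) -!a2 (gmulVK a2 l2 v2) v2.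
  exact: (gmulx1 a2 l2 v2).
have ck2 : forall g y, mulG (mulG g (mulG (mulG (invG g) y) (invG (invG g)))) (invG g) = y.
  move=> g y. rewrite (ginvK a2 l2 v2) -!a2 (gmulKV a2 l2 v2) (gmulxV a2 l2 v2).
  exact: (gmulx1 a2 l2 v2).
have intc : forall g x, (W2°) x -> (W2°) (mulG (mulG g x) (invG g)).
  move=> g x Wx.
  have := conjc (invG g) (mulG (mulG g x) (invG g)) W2.
  rewrite ck1 => /(_ Wx) H; apply: filterS H => y /= Hy.
  by rewrite -(ck2 g y); apply: W2c.
pose W := W2° `&` [set x | (W2°) (invG x)].
have Wsym : sym_open_nbhd invG oneG W.
  split.
  - apply: openI; first exact: open_interior.
    by move/continuousP: ci => /(_ _ (@open_interior _ W2)).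
  - by split => //=; rewrite (ginv1 a2 l2 v2).
  - by move=> x [Wx Wix]; split => //=; rewrite (ginvK a2 l2 v2).
have Wc : forall g x, W x -> W (mulG (mulG g x) (invG g)).
  move=> g x [Wx Wix]; split; first exact: intc.
  rewrite /= (ginvM a2 l2 v2) (ginvM a2 l2 v2) (ginvK a2 l2 v2) a2.
  exact: intc.
have Wsub : forall x, W x -> (C `&` D `&` (A `&` B)) x.
  by move=> x [Wx _]; apply: W2s; apply: nbhs_singleton.
exists K, W, W; split => //.
move=> h h' g g' [_ hm] [_ hm'] hh' Hw c Kc.
have hi := @hom_inv O G mulO invO oneO mulG invG oneG h a1 l1 v1 a2 l2 v2 hm.
set w := mulG g' (invG g) in Hw.
have eg : g' = mulG w g by rewrite /w -a2 v2 (gmulx1 a2 l2 v2).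
rewrite /conj_act eg; clearbody w.
pose s := mulG (mulG (invG w) (mulG (h' c) (h (invO c)))) (mulG (mulG (h c) w) (invG (h c))).
have V0s : V0 s.
  have [[Cw _] _] := Wsub _ (let: And3 _ _ Ws := Wsym in Ws w Hw).
  have [[_ Dh] _] := Wsub _ (hh' c Kc).
  have [Ax _] := CD _ _ Cw Dh.
  have [_ [_ By]] := Wsub _ (Wc (h c) w Hw).
  exact: (AB _ _ Ax By).
have := V0V _ (V0c (invG g) s V0s).
congr V.
rewrite /s (ginvK a2 l2 v2) !hi (ginvM a2 l2 v2) -!a2 (gmulKV a2 l2 v2) (gmulVK a2 l2 v2).
by [].
Qed.
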